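(* Let $Q$ be a finite power associative loop satisfying $(ab^i)b^j=ab^{i+j}$ for all $a,b\in Q$ and all $i,j\in\mathbb Z$. Then the order of every $x\in Q$ divides $|Q|$.
   Context: A loop is a magma with identity in which all left and right translations are bijections; it is power associative if every element generates a subgroup (so powers $b^i$, $i\in\mathbb Z$, are well defined). *)

(* Defs.v *)
From mathcomp Require Import all_boot all_order all_algebra.
Set Implicit Arguments. Unset Strict Implicit. Unset Printing Implicit Defensive.
Import GRing.Theory.

Section Loops.
Variables (T : finType) (mul : T -> T -> T) (e : T).

Definition is_loop : Prop :=
  (forall x, mul e x = x /\ mul x e = x) /\
  (forall a, bijective (mul a)) /\
  (forall a, bijective (fun x => mul x a)).

Definition ldiv (a c : T) : T := odflt e [pick y | mul a y == c].
Definition rdiv (c a : T) : T := odflt e [pick y | mul y a == c].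

Definition subloop_closed (S : {set T}) : bool :=
  [forall x in S, forall y in S,
     [&& mul x y \in S, ldiv x y \in S & rdiv x y \in S]].

Definition gen (b : T) : {set T} :=
  \bigcap_(S : {set T} | (b \in S) && subloop_closed S) S.

Definition power_associative : Prop :=
  forall b, {in gen b & gen b & gen b, forall x y z, mul (mul x y) z = mul x (mul y z)}.

(* Powers b^n (n : nat) and b^i (i : int); b^(-n) is the inverse of b^n. *)
Definition npow (b : T) (n : nat) : T := iter n (fun y => mul y b) e.
Definition zpow (b : T) (i : int) : T :=
  match i with
  | Posz n => npow b n
  | Negz n => ldiv (npow b n.+1) e
  end.

Definition elt_order (x : T) : nat := #|gen x|.

End Loops.

(* Main.v *)
Require Import Defs.
From mathcomp Require Import all_boot all_order all_algebra.
From mathcomp Require Import fingroup perm.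
From mathcomp Require Import zify.

Theorem lemma1p10 (T : finType) (mul : T -> T -> T) (e : T) :
  is_loop mul e ->
  power_associative mul e ->
  (forall (a b : T) (i j : int),
     mul (mul a (zpow mul e b i)) (zpow mul e b j) = mul a (zpow mul e b (i + j)%R)) ->
  forall x : T, elt_order mul e x %| #|T|.
Proof.
move=> [Hid [Hl Hr]] _ H3 x.
have linj a : injective (mul a) by apply: bij_inj.
have rinj a : injective (fun y => mul y a) by apply: bij_inj.
have ldivE a c y : mul a y = c -> ldiv mul e a c = y.
  move=> Hy; rewrite /ldiv; case: pickP => [z /eqP Hz|none] /=.
    by apply: (linj a); rewrite Hz Hy.
  by move: (none y); rewrite Hy eqxx.
have rdivE a c y : mul y a = c -> rdiv mul e c a = y.
  move=> Hy; rewrite /rdiv; case: pickP => [z /eqP Hz|none] /=.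
    by apply: (rinj a); rewrite /= Hz Hy.
  by move: (none y); rewrite Hy eqxx.
set np := npow mul e x.
have npA a m n : mul (mul a (np m)) (np n) = mul a (np (m + n)).
  by have := H3 a x (Posz m) (Posz n); rewrite -PoszD.
have npD m n : mul (np m) (np n) = np (m + n).
  by have := npA e m n; rewrite !(proj1 (Hid _)).
pose p : {perm T} := perm (rinj x).
set k := #[p]%g.
have k_gt0 : 0 < k by apply: order_gt0.
have npk : np k = e.
  have := permX p e k; rewrite expg_order perm1 => ->.
  by apply: eq_iter => y; rewrite permE.
have npkq q : np (q * k) = e.
  elim: q => [|q IH] //; by rewrite mulSn -npD npk IH (proj1 (Hid _)).
have npmod n : np n = np (n %% k).
  by rewrite {1}(divn_eq n k) -npD npkq (proj1 (Hid _)).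
have npK n : np (n + k) = np n by rewrite -npD npk (proj2 (Hid _)).
set P := [set np (val i) | i : 'I_k].
have inP n : np n \in P.
  by rewrite npmod; apply/imsetP; exists (Ordinal (ltn_pmod n k_gt0)).
have np0 : np 0 = e by [].
have np1 : np 1 = x by rewrite /np /npow /= (proj1 (Hid _)).
have genE : gen mul e x = P.
  apply/eqP; rewrite eqEsubset; apply/andP; split.
    apply: bigcap_inf; apply/andP; split; first by rewrite -np1 inP.
    apply/forall_inP => a /imsetP[i _ ->]; apply/forall_inP => b /imsetP[j _ ->].
    apply/and3P; split.
    - by rewrite npD inP.
    - rewrite (ldivE _ _ (np (j + (k - i)))) ?inP // npD.
      have -> : i + (j + (k - i)) = j + k by have := ltn_ord i; lia.
      by rewrite npK.
    - rewrite (rdivE _ _ (np (i + (k - j)))) ?inP // npD.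
      have -> : i + (k - j) + j = i + k by have := ltn_ord j; lia.
      by rewrite npK.
  apply/bigcapsP => S /andP[xS cl].
  have clS a b : a \in S -> b \in S -> [&& mul a b \in S, ldiv mul e a b \in S & rdiv mul e a b \in S].
    by move=> aS bS; move/forall_inP: cl => /(_ a aS) /forall_inP /(_ b bS).
  have eS : e \in S.
    case/and3P: (clS x x xS xS) => _ + _.
    by rewrite (ldivE _ _ e) // (proj2 (Hid _)).
  have npS n : np n \in S.
    elim: n => [|n IH] //.
    have -> : np n.+1 = mul (np n) x by [].
    by case/and3P: (clS _ _ IH xS).
  by apply/subsetP => y /imsetP[i _ ->]; apply: npS.
rewrite /elt_order genE.
pose C a := [set mul a y | y in P].
have cardC a : #|C a| = #|P| by apply: card_imset.
have inC a : a \in C a by apply/imsetP; exists e; rewrite -?np0 ?inP // (proj2 (Hid _)).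
have Csub a b : b \in C a -> C b \subset C a.
  case/imsetP=> y /imsetP[i _ ->] ->.
  apply/subsetP => z /imsetP[w /imsetP[j _ ->] ->].
  by rewrite npA; apply/imsetP; exists (np (i + j)); rewrite ?inP.
have Ceq a b : b \in C a -> C b = C a.
  by move=> bC; apply/eqP; rewrite eqEcard (Csub _ _ bC) !cardC leqnn.
have part : partition [set C a | a in T] [set: T].
  apply/and3P; split.
  - apply/eqP/setP => y; rewrite in_setT; apply/bigcupP; exists (C y) => //.
    by apply: imset_f.
  - apply/trivIsetP => A B /imsetP[a _ ->] /imsetP[b _ ->] neq.
    rewrite disjoint_subset; apply/subsetP => c ca; rewrite inE; apply/negP => cb; apply: (negP neq).
    by rewrite -(Ceq _ _ ca) -(Ceq _ _ cb).
  - apply/negP => /imsetP[a _ H].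
    by have := inC a; rewrite -H in_set0.
have Hu : {in [set C a | a in T], forall A : {set T}, #|A| = #|P|}.
  by move=> A /imsetP[a _ ->]; apply: cardC.
have HT := card_uniform_partition Hu part.
by rewrite -cardsT HT dvdn_mull.
Qed.
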